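(* Let $n\ge 2$ be a power of $2$, $m=2n$, $R=\mathbb{Z}[\zeta_m]\cong\mathbb{Z}[x]/(x^n+1)$, and let $q$ be a prime with $q\equiv 1 \pmod 4$. Let $\mathfrak{a}\mid qR$ be an ideal with $R/\mathfrak{a}\cong\mathbb{F}_{q^k}$, and let $\rho:R_q=R/qR\to R/\mathfrak{a}$ be the quotient map. Suppose the error distribution $\chi$ on $R_q$ is formed on the $\zeta$-basis with coefficients distributed according to a distribution $\chi_0$ on $\mathbb{F}_q$. Then $\rho(\zeta^k)\in\mathbb{F}_q$, the elements $1,\rho(\zeta),\dots,\rho(\zeta)^{k-1}$ form an $\mathbb{F}_q$-basis of $\mathbb{F}_{q^k}$, and the pushforward distribution $\chi':=\rho(\chi)$ on $\mathbb{F}_{q^k}$ is formed on this $\zeta$-basis with independent coefficients, each distributed according to $\chi_0'$, where $\chi_0'$ is the distribution of $\sum_{i=0}^{n/k-1}\rho(\zeta^k)^i X_i$ with $X_0,\dots,X_{n/k-1}$ independent and each distributed according to $\chi_0$.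
   Context: $\zeta=\zeta_m$ denotes a primitive $m$-th root of unity in $R$ and also its image in any quotient of $R$. The $\zeta$-basis of $R_q$ over $\mathbb{F}_q$ is $1,\zeta,\dots,\zeta^{n-1}$; for a quotient $R/\mathfrak{a}$ of $\mathbb{F}_q$-dimension $d$ the $\zeta$-basis is $1,\zeta,\dots,\zeta^{d-1}$. A distribution $\chi$ on a ring with $\zeta$-basis $1,\zeta,\ldots,\zeta^{d-1}$ is ''formed on the $\zeta$-basis with coefficients distributed according to $\chi_0$'' if a sample is $\sum_{i=0}^{d-1} e_i\zeta^i$ with $e_0,\dots,e_{d-1}$ independent and each distributed according to $\chi_0$. *)

(* Defs.v *)
From HB Require Import structures.
From mathcomp Require Import all_boot all_order all_algebra all_field.
Set Implicit Arguments. Unset Strict Implicit. Unset Printing Implicit Defensive.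
Import Order.TTheory GRing.Theory Num.Theory.
Local Open Scope ring_scope.

(* Law (probability mass function, values in R) of f(e_0,...,e_{N-1}) where
   e_0,...,e_{N-1} are independent, each distributed according to chi0. *)
Definition iid_law (R : pzRingType) (F : finType) (T : eqType) (N : nat)
    (chi0 : F -> R) (f : {ffun 'I_N -> F} -> T) : T -> R :=
  fun y => \sum_(e : {ffun 'I_N -> F}) ((f e == y)%:R * \prod_(i < N) chi0 (e i)).

Definition formed_on (R : pzRingType) (F : finFieldType) (V : lmodType F) (N : nat)
    (b : 'I_N -> V) (chi0 : F -> R) : V -> R :=
  iid_law chi0 (fun e : {ffun 'I_N -> F} => \sum_(i < N) e i *: b i).

Definition is_distribution (R : numDomainType) (F : finType) (chi0 : F -> R) :=
  (forall x, 0 <= chi0 x) /\ \sum_(x : F) chi0 x = 1.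

(* Main.v *)
Require Import Defs.
From HB Require Import structures.
From mathcomp Require Import all_boot all_order all_algebra all_field.
From mathcomp Require Import zify.
Import Order.TTheory GRing.Theory Num.Theory.



Lemma gcd_closed (P : nat -> Prop) :
  (forall a b, P a -> P b -> P (a %% b)%N) ->
  forall a b, P a -> P b -> P (gcdn a b).
Proof.
move=> H a b; elim/ltn_ind: b a => b IH a Pa Pb.
case: (posnP b) => [b0|bpos]; first by rewrite b0 gcdn0.
rewrite gcdnC -gcdn_modr; apply: IH; [exact: ltn_pmod| exact: Pb| exact: H].
Qed.

Lemma geom_nat (q k : nat) : (0 < q)%N -> ((q - 1) * \sum_(i < k) q ^ i = q ^ k - 1)%N.
Proof.
move=> q0; elim: k => [|k IH]; first by rewrite big_ord0 muln0.
rewrite big_ord_recr /= mulnDr IH expnS.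
have : (0 < q ^ k)%N by rewrite expn_gt0 q0.
move: (q ^ k) => X X0; nia.
Qed.

Lemma odd_geom (q k : nat) : odd q -> odd (\sum_(i < k) q ^ i) = odd k.
Proof.
move=> oq; elim: k => [|k IH]; first by rewrite big_ord0.
by rewrite big_ord_recr /= oddD IH oddX oq orbT /=; case: (odd k).
Qed.

Lemma lte2 (q : nat) : (q %% 4 = 1)%N -> forall k e,
  (2 ^ e %| q ^ k - 1)%N -> (2 ^ e %| k * (q - 1))%N.
Proof.
move=> q4; have oq : odd q.
  by rewrite (divn_eq q 4) q4 oddD oddM andbF.
have q0 : (0 < q)%N by case: q oq q4.
elim/ltn_ind => k IH e.
case ok: (odd k).
  rewrite -geom_nat // Gauss_dvdl; first by move=> h; apply: dvdn_mull.
  by apply: coprimeXl; rewrite coprime2n odd_geom.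
have [j kj] : exists j, k = (j.*2)%N by exists k./2; rewrite -[LHS]odd_double_half ok.
case: (posnP j) => [j0|jpos]; first by rewrite kj j0.
have qj4 : (q ^ j %% 4 = 1)%N by rewrite -modnXm q4 exp1n.
have [c hc] : exists c, (q ^ j = 4 * c + 1)%N.
  by exists (q ^ j %/ 4); rewrite {1}(divn_eq (q ^ j) 4) qj4 mulnC.
have fac : (q ^ k - 1 = (q ^ j - 1) * 2 * (2 * c + 1))%N.
  by rewrite kj -addnn expnD hc; nia.
rewrite fac; case: e => [|e]; first by rewrite expn0 !dvd1n.
rewrite Gauss_dvdl; last by apply: coprimeXl; rewrite coprime2n oddD oddM.
rewrite expnS mulnC dvdn_pmul2r // => h.
rewrite kj -mul2n -mulnA.
have H2 : (2 ^ e %| j * (q - 1)) by apply: (IH j) => //; rewrite kj -addnn; lia.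
by rewrite (mulnC 2 (j * _)); apply: dvdn_mul.
Qed.
Local Open Scope ring_scope.
Section S.
Variables (q : nat) (L : fieldExtType 'F_q).
Variable rho : {lrmorphism {poly 'F_q} -> L}.
Let z := rho 'X.
Lemma rhoE p : rho p = \sum_(i < size p) p`_i *: z ^+ i.
Proof.
rewrite -{1}[p]coefK poly_def linear_sum; apply: eq_bigr => i _.
by rewrite linearZ rmorphXn.
Qed.
Hypothesis Hrho_sur : forall y : L, exists p : {poly 'F_q}, rho p = y.
Lemma span_pow d c : (0 < d)%N -> z ^+ d = c%:A ->
  (fullv <= <<[seq (z ^+ i)%R | i <- iota 0 d]>>)%VS.
Proof.
move=> d0 hc; apply/subvP => y _; have [p <-] := Hrho_sur y; rewrite rhoE.
apply: rpred_sum => [] [i hi] _ /=; apply: rpredZ.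
rewrite (divn_eq i d) exprD mulnC exprM hc exprZn expr1n mulr_algl.
apply: rpredZ; apply: memv_span; apply: map_f; rewrite mem_iota add0n ltn_pmod //.
Qed.
End S.

Section T.
Variables (q : nat) (L : fieldExtType 'F_q).
Variable rho : {lrmorphism {poly 'F_q} -> L}.
Hypothesis Hrho_sur : forall y : L, exists p : {poly 'F_q}, rho p = y.
Let z := rho 'X.
Lemma alg_part t k (Hq: prime q) (Hq4 : (q %% 4 = 1)%N) (HdimL : \dim {:L} = k)
  (Hker : rho ('X^(2 ^ t.+1) + 1) = 0) :
  exists r, [/\ z ^+ k = r%:A, (0<k)%N, (k %| 2 ^ t.+1)%N &
     basis_of fullv [seq z ^+ i | i <- iota 0 k]].
Proof.
set n := (2 ^ t.+1)%N.
have n0 : (0 < n)%N by rewrite expn_gt0.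
have zn : z ^+ n = -1.
  by apply/eqP; rewrite -addr_eq0 -Hker rmorphD rmorph1 rmorphXn.
have z0 : z != 0.
  apply/eqP => h; move: zn; rewrite h expr0n -(prednK n0) /= => /eqP.
  by rewrite eq_sym oppr_eq0 oner_eq0.
have z2n : z ^+ (n * 2) = 1 by rewrite exprM zn expr2 mulN1r opprK.
have cardF : #|'F_q| = q by rewrite card_Fp.
have zqk : z ^+ (q ^ k) = z.
  have := Fermat's_little_theorem {:L}%AS z.
  by rewrite memvf cardF HdimL => /esym/eqP.
have q0 : (0 < q)%N by apply: prime_gt0.
have zq1 : z ^+ (q ^ k - 1) = 1.
  apply: (mulIf z0); rewrite mul1r -exprSr subn1 prednK ?zqk //.
  by rewrite expn_gt0 q0.
have zg : z ^+ (gcdn (n * 2) (q ^ k - 1)) = 1.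
  apply: (@gcd_closed (fun i => z ^+ i = 1)) => // a b za zb.
  by rewrite {1}(divn_eq a b) exprD mulnC exprM zb expr1n mul1r in za.
have gdiv : (gcdn (n * 2) (q ^ k - 1) %| k * (q - 1))%N.
  have : (gcdn (n * 2) (q ^ k - 1) %| 2 ^ t.+2)%N.
    by rewrite expnSr dvdn_gcdl.
  case/dvdn_pfactor => // m _ hm; rewrite hm; apply: lte2 => //.
  by rewrite -hm dvdn_gcdr.
have zkq1 : z ^+ (k * (q - 1)) = 1.
  by case/dvdnP: gdiv => c ->; rewrite mulnC exprM zg expr1n.
have zk1 : z ^+ k \in 1%VS.
  rewrite (Fermat's_little_theorem 1%AS) dimv1 cardF expn1 -exprM.
  have -> : (k * q = k * (q - 1) + k)%N by rewrite -mulnSr subn1 prednK.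
  by rewrite exprD zkq1 mul1r.
case/vlineP: zk1 => r hr.
have k0 : (0 < k)%N by rewrite -HdimL (adim_gt0 {:L}%AS).
have dimle : forall d c, (0 < d)%N -> z ^+ d = c%:A -> (k <= d)%N.
  move=> d c d0 hc; rewrite -HdimL.
  apply: leq_trans (dimvS (@span_pow q L rho Hrho_sur d c d0 hc)) _.
  by apply: leq_trans (dim_span _) _; rewrite size_map size_iota.
have kn : (k %| n)%N.
  have : z ^+ (gcdn k n) \in 1%VS.
    apply: (@gcd_closed (fun i => z ^+ i \in 1%VS));
      [| by rewrite hr rpredZ // mem1v | by rewrite zn rpredN mem1v].
    move=> a b za zb.
    have e : z ^+ a = z ^+ (a %% b) * (z ^+ b) ^+ (a %/ b).
      by rewrite {1}(divn_eq a b) exprD mulnC exprM mulrC.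
    have zb0 : (z ^+ b) ^+ (a %/ b) != 0 by rewrite !expf_neq0.
    rewrite (_ : z ^+ (a %% b) = z ^+ a / (z ^+ b) ^+ (a %/ b)); last first.
      by rewrite e mulfK.
    by rewrite rpredM // rpredV rpredX.
  case/vlineP => c hc.
  have g0 : (0 < gcdn k n)%N by rewrite gcdn_gt0 k0.
  have := dimle _ c g0 hc; have := dvdn_leq k0 (dvdn_gcdl k n).
  move=> h1 h2; have -> : k = gcdn k n by apply/eqP; rewrite eqn_leq h1 h2.
  exact: dvdn_gcdr.
exists r; split => //.
by rewrite basisEdim size_map size_iota HdimL leqnn andbT (@span_pow q L rho Hrho_sur k r).
Qed.
End T.
Section Idx.
Variables (n a k : nat) (hna : n = (a * k)%N).
Lemma hidx_lt (p : 'I_a * 'I_k) : (p.1 * k + p.2 < n)%N.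
Proof. rewrite hna; have := ltn_ord p.1; have := ltn_ord p.2; nia. Qed.
Definition hidx (p : 'I_a * 'I_k) : 'I_n := Ordinal (hidx_lt p).
Lemma k_gt0 (i : 'I_n) : (0 < k)%N.
Proof.
have h : (i < a * k)%N by rewrite -hna ltn_ord.
by move: h; case: k => //; rewrite muln0.
Qed.
Lemma hinv1_lt (i : 'I_n) : (i %/ k < a)%N.
Proof. by rewrite ltn_divLR ?(k_gt0 i) // -hna. Qed.
Lemma hinv2_lt (i : 'I_n) : (i %% k < k)%N.
Proof. by rewrite ltn_pmod ?(k_gt0 i). Qed.
Definition hinv (i : 'I_n) : 'I_a * 'I_k := (Ordinal (hinv1_lt i), Ordinal (hinv2_lt i)).
Lemma hidxK : cancel hidx hinv.
Proof.
move=> [l j]; have k0 : (0 < k)%N := leq_ltn_trans (leq0n j) (ltn_ord j).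
congr pair; apply: val_inj => /=.
  by rewrite divnMDl // divn_small ?addn0.
by rewrite modnMDl modn_small.
Qed.
Lemma hinvK : cancel hinv hidx.
Proof. by move=> i; apply: val_inj => /=; rewrite -divn_eq. Qed.
Lemma hidx_bij : bijective hidx.
Proof. by exists hinv; [exact: hidxK | exact: hinvK]. Qed.

Lemma big_hidx (V : Type) (idx : V) (op : Monoid.com_law idx) (G : 'I_n -> V) :
  \big[op/idx]_(i < n) G i = \big[op/idx]_(j < k) \big[op/idx]_(l < a) G (hidx (l, j)).
Proof.
rewrite (reindex hidx) /=; last by apply: onW_bij; exact: hidx_bij.
by rewrite exchange_big pair_bigA; apply: eq_bigr => [[l j]].
Qed.
End Idx.
Arguments hidx {n a k} hna p.
Arguments hinv {n a k} hna i.
Arguments hidxK {n a k} hna x.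
Arguments hinvK {n a k} hna x.
Arguments big_hidx {n a k} hna {V idx op} G.

Lemma coef_P (F : fieldType) n (e : 'I_n -> F) (i : 'I_n) :
  (\sum_(j < n) e j *: ('X^j : {poly F}))`_i = e i.
Proof.
rewrite coef_sum (bigD1 i) //= coefZ coefXn eqxx mulr1 big1 ?addr0 //.
by move=> j hj; rewrite coefZ coefXn (_ : (i == j :> nat) = false) ?mulr0 //; apply/negbTE; rewrite eq_sym.
Qed.

Lemma dist_part (F : finFieldType) (L : fieldExtType F)
  (rho : {lrmorphism {poly F} -> L}) (n k a : nat) (r : F)
  (R : realFieldType) (chi0 : F -> R) (hna : n = (a * k)%N)
  (hr : rho 'X ^+ k = r%:A) (y : L) :
  \sum_(e : {ffun 'I_n -> F})
       ((rho (\sum_(i < n) e i *: 'X^i) == y)%:R *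
         formed_on (fun i : 'I_n => ('X^i : {poly F})) chi0 (\sum_(i < n) e i *: 'X^i))
  = formed_on (fun j : 'I_k => rho 'X ^+ j)
      (iid_law chi0 (fun X : {ffun 'I_a -> F} => \sum_(i < a) r ^+ i * X i)) y.
Proof.
set z := rho 'X.
set f := (fun X : {ffun 'I_a -> F} => \sum_(i < a) r ^+ i * X i).
pose w := (fun X : {ffun 'I_a -> F} => \prod_(l < a) chi0 (X l)).
have chiE : forall e : {ffun 'I_n -> F},
    formed_on (fun i : 'I_n => ('X^i : {poly F})) chi0 (\sum_(i < n) e i *: 'X^i)
    = \prod_(i < n) chi0 (e i).
  move=> e; rewrite /formed_on /iid_law [LHS](bigD1 e) //= eqxx mul1r [X in _ + X]big1 ?addr0 //.
  move=> e' ne'; rewrite (_ : (_ == _) = false) ?mul0r //; apply/negbTE.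
  apply: contra ne' => /eqP h; apply/eqP/ffunP => i.
  by have := congr1 (fun p : {poly F} => p`_i) h; rewrite /= !coef_P.
under eq_bigr do rewrite chiE.
have rhoP : forall e : {ffun 'I_n -> F}, rho (\sum_(i < n) e i *: 'X^i) =
    \sum_(j < k) (\sum_(l < a) r ^+ l * e (hidx hna (l, j))) *: z ^+ j.
  move=> e; rewrite linear_sum (big_hidx hna) /=; apply: eq_bigr => j _.
  rewrite scaler_suml; apply: eq_bigr => l _.
  rewrite linearZ rmorphXn /= exprD mulnC exprM hr exprZn expr1n mulr_algl.
  by rewrite scalerA mulrC.
pose eof (E : {ffun 'I_k -> {ffun 'I_a -> F}}) : {ffun 'I_n -> F} :=
  [ffun i => E (hinv hna i).2 (hinv hna i).1].
pose Eof (e : {ffun 'I_n -> F}) : {ffun 'I_k -> {ffun 'I_a -> F}} :=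
  [ffun j => [ffun l => e (hidx hna (l, j))]].
have eofK : cancel eof Eof.
  by move=> E; apply/ffunP => j; apply/ffunP => l; rewrite !ffunE hidxK.
have EofK : cancel Eof eof.
  by move=> e; apply/ffunP => i; rewrite !ffunE -surjective_pairing hinvK.
rewrite (reindex eof) /=; last by apply: onW_bij; exists Eof.
under eq_bigr => E _.
  rewrite rhoP (big_hidx hna).
  under eq_bigr => j _ do under eq_bigr => l _ do rewrite ffunE hidxK /=.
  under [X in (_ == _)%:R * X]eq_bigr => j _ do under eq_bigr => l _ do rewrite ffunE hidxK /=.
  over.
rewrite /formed_on /iid_law /=.
under [RHS]eq_bigr => c _ do rewrite bigA_distr_bigA mulr_sumr.
rewrite [RHS]exchange_big /=; apply: eq_bigr => E _.
pose c0 : {ffun 'I_k -> F} := [ffun j => f (E j)].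
rewrite (bigD1 c0) //= [X in _ + X]big1 ?addr0.
  congr (_ * _).
    by congr ((_ == _)%:R); apply: eq_bigr => j _; rewrite ffunE.
  by apply: eq_bigr => j _; rewrite ffunE eqxx mul1r.
move=> c hc.
case: (pickP (fun j => c j != c0 j)) => [j hj | hall]; last first.
  by case/negP: hc; apply/eqP/ffunP => j; move: (hall j) => /negbFE/eqP.
rewrite [X in _ * X](bigD1 j) //= (_ : (f (E j) == c j) = false) ?mul0r ?mulr0 //.
by apply/negbTE; move: hj; rewrite ffunE eq_sym.
Qed.

Theorem mainTheorem1
  (q t k : nat) (Hq : prime q) (Hq4 : (q %% 4 = 1)%N)
  (L : fieldExtType 'F_q) (HdimL : \dim {:L} = k)
  (rho : {lrmorphism {poly 'F_q} -> L})
  (Hrho_sur : forall y : L, exists p : {poly 'F_q}, rho p = y)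
  (Hrho_ker : rho ('X^(2 ^ t.+1) + 1) = 0)
  (R : realFieldType) (chi0 : 'F_q -> R) (Hchi0 : is_distribution chi0) :
  let n := (2 ^ t.+1)%N in
  let chi : {poly 'F_q} -> R :=
    formed_on (fun i : 'I_n => ('X^i : {poly 'F_q})) chi0 in
  (* pushforward rho(chi): sum over the (finite) support of chi, which is
     parametrized bijectively by the coefficient vectors e *)
  let chi' : L -> R := fun y =>
    \sum_(e : {ffun 'I_n -> 'F_q})
       ((rho (\sum_(i < n) e i *: 'X^i) == y)%:R * chi (\sum_(i < n) e i *: 'X^i)) in
  exists r : 'F_q,
    [/\ rho ('X^k) = r%:A,
        basis_of fullv [seq rho 'X ^+ i | i <- iota 0 k] &
        forall y : L,
          chi' y =
          formed_on (fun j : 'I_k => rho 'X ^+ j)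
            (iid_law chi0 (fun X : {ffun 'I_(n %/ k) -> 'F_q} =>
                              \sum_(i < n %/ k) r ^+ i * X i)) y].
Proof.
move=> n chi chi'.
have [r [hr k0 kn hb]] := @alg_part q L rho Hrho_sur t k Hq Hq4 HdimL Hrho_ker.
exists r; split => //; first by rewrite rmorphXn.
move=> y; rewrite /chi' /chi; apply: dist_part => //.
by rewrite divnK.
Qed.
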